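(* Let $m\ge 2$ and let $q$ be an $m\times m$ matrix each of whose entries is either $0$ or an indeterminate, where the indeterminates occurring in $q$ are pairwise distinct and algebraically independent over $F$ ($F=\mathbb{R}$ or $\mathbb{C}$), and suppose $\det q$ is an irreducible polynomial. Then for almost all assignments of values to the indeterminates satisfying the constraint $\det q=0$ — precisely, for every assignment with $\det q=0$ at which a certain polynomial $P$ not divisible by $\det q$ does not vanish — every nonzero vector $\psi\in F^m$ with $q\psi=0$ has $\psi_j\neq 0$ for every index $j=1,\dots,m$.
   Context: The matrix $q$ is the off-diagonal block of a chiral tight-binding Hamiltonian on a bipartite graph (rows indexed by white sites, columns by black sites, entry an independent indeterminate ''hopping term'' if the sites are adjacent, $0$ otherwise). A vector $\psi$ with $q\psi=0$ is a zero energy (null) state supported on one sublattice; the claim is that it has nonzero amplitude on every site of that sublattice. *)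

(* Defs.v *)
From mathcomp Require Import all_boot all_algebra.
From mathcomp Require Import reals complex.
From mathcomp Require Import mpoly.
Set Implicit Arguments. Unset Strict Implicit. Unset Printing Implicit Defensive.
Import GRing.Theory.
Local Open Scope ring_scope.

Definition irreducible_elt (R : idomainType) (p : R) : Prop :=
  [/\ p != 0, p \isn't a GRing.unit &
      forall a b : R, p = a * b -> a \is a GRing.unit \/ b \is a GRing.unit].

Definition divides (R : comNzRingType) (a b : R) : Prop := exists c : R, b = c * a.

(* The matrix q : 'M_m with entries in {mpoly F[n]}: the k-th indeterminate 'X_k
   sits at position pos k (pos injective, so the indeterminates are pairwise
   distinct); all other entries are 0. *)
Definition hop_mx {F : fieldType} {m n : nat} (pos : 'I_n -> 'I_m * 'I_m)
  : 'M[{mpoly F[n]}]_m :=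
  \matrix_(i < m, j < m)
    (if [pick k | pos k == (i, j)] is Some k then 'X_k else 0).

Definition null_state_claim (F : fieldType) : Prop :=
  forall (m n : nat) (pos : 'I_n -> 'I_m * 'I_m),
    (1 < m)%N ->
    injective pos ->
    irreducible_elt (\det (@hop_mx F m n pos)) ->
    exists P : {mpoly F[n]},
      ~ divides (\det (@hop_mx F m n pos)) P /\
      forall x : 'I_n -> F,
        (\det (@hop_mx F m n pos)).@[x] = 0 ->
        P.@[x] != 0 ->
        forall psi : 'cV[F]_m,
          psi != 0 ->
          map_mx (meval x) (@hop_mx F m n pos) *m psi = 0 ->
          forall j : 'I_m, psi j 0 != 0.

(* Main.v *)
Require Import Defs.
From mathcomp Require Import all_boot all_algebra.
From mathcomp Require Import reals complex.
From mathcomp Require Import mpoly.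
From mathcomp Require Import zify.
Set Implicit Arguments. Unset Strict Implicit. Unset Printing Implicit Defensive.
Import GRing.Theory.
Local Open Scope ring_scope.


Local Open Scope nat_scope.
Section FK.
Variables (I J : finType) (j0 : J) (E : I -> J -> bool).

Definition matching (R0 : {set I}) (C0 : {set J}) :=
  exists f : I -> J, (forall i, i \in R0 -> (f i \in C0) && E i (f i)) /\ {in R0 &, injective f}.

Definition zblock (R0 : {set I}) (C0 : {set J}) :=
  exists (R : {set I}) (S : {set J}), [/\ R \subset R0, S \subset C0,
     #|R| + #|S| = #|R0|.+1 & forall i j, i \in R -> j \in S -> ~~ E i j].

Lemma FK_aux N : forall (R0 : {set I}) (C0 : {set J}), #|R0| <= N -> #|R0| = #|C0| ->
  matching R0 C0 \/ zblock R0 C0.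
Proof.
elim: N => [|N IH] R0 C0 HN Hc.
  left; exists (fun _ => j0); split => [i|i i'].
    by move: HN; rewrite leqn0 => /eqP/cards0_eq ->; rewrite inE.
  by move: HN; rewrite leqn0 => /eqP/cards0_eq ->; rewrite inE.
case: (leqP #|R0| N) => HRN; first exact: IH.
have {HRN} HR0 : #|R0| = N.+1 by lia.
case: (boolP [exists i in R0, exists j in C0, E i j]) => [/existsP [i /andP [iR /existsP [j /andP [jC Eij]]]] | Hno].
  have HR0' : #|R0 :\ i| = N by rewrite (cardsD1 i R0) iR in HR0; lia.
  have HC0' : #|C0 :\ j| = N by rewrite (cardsD1 j C0) jC in Hc; lia.
  have [[f [Hf1 Hf2]]|[R1 [S1 [sR1 sS1 cRS zRS]]]] := IH (R0 :\ i) (C0 :\ j) (eq_leq HR0') (etrans HR0' (esym HC0')).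
    left; exists (fun x => if x == i then j else f x); split.
      move=> x xR; case: eqP => [->|/eqP xi]; first by rewrite jC Eij.
      have /andP [fC fE] : (f x \in C0 :\ j) && E x (f x) by apply: Hf1; rewrite !inE xi.
      by rewrite fE andbT; move: fC; rewrite !inE => /andP [].
    move=> x y xR yR /=.
    case: (eqVneq x i) => [->|xi]; case: (eqVneq y i) => [->|yi] //.
    - move=> fj; have /andP [h _] : (f y \in C0 :\ j) && E y (f y) by apply: Hf1; rewrite !inE yi yR.
      by move: h; rewrite -fj !inE eqxx.
    - move=> fj; have /andP [h _] : (f x \in C0 :\ j) && E x (f x) by apply: Hf1; rewrite !inE xi xR.
      by move: h; rewrite fj !inE eqxx.
    by apply: Hf2; rewrite !inE ?xi ?yi.
  have sR1' : R1 \subset R0 by apply: subset_trans sR1 (subsetDl _ _).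
  have sS1' : S1 \subset C0 by apply: subset_trans sS1 (subsetDl _ _).
  have lR1 : #|R1| <= N by rewrite -HR0'; apply: subset_leq_card.
  have lS1 : #|S1| <= N by rewrite -HC0'; apply: subset_leq_card.
  have cT1 : #|C0 :\: S1| = #|C0| - #|S1|.
    by rewrite cardsD (setIidPr sS1').
  have cR2 : #|R0 :\: R1| = #|R0| - #|R1|.
    by rewrite cardsD (setIidPr sR1').
  have e1 : #|R1| = #|C0 :\: S1| by rewrite cT1; lia.
  have e2 : #|R0 :\: R1| <= N by rewrite cR2; lia.
  have e3 : #|R0 :\: R1| = #|S1| by rewrite cR2; lia.
  have [[f1 [Hf11 Hf12]]|[R2 [S2 [sR2 sS2 cRS2 zRS2]]]] :=
     IH R1 (C0 :\: S1) lR1 e1.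
    have [[f2 [Hf21 Hf22]]|[R2 [S2 [sR2 sS2 cRS2 zRS2]]]] :=
     IH (R0 :\: R1) S1 e2 e3.
      left; exists (fun x => if x \in R1 then f1 x else f2 x); split.
        move=> x xR; case: ifP => xR1.
          by have /andP [+ ->] := Hf11 x xR1; rewrite inE => /andP [_ ->].
        have /andP [h ->] : (f2 x \in S1) && E x (f2 x) by apply: Hf21; rewrite inE xR1 xR.
        by rewrite (subsetP sS1' _ h).
      move=> x y xR yR /=.
      case: ifP => xR1; case: ifP => yR1.
      - exact: Hf12.
      - move=> e; have /andP [h1 _] := Hf11 x xR1.
        have /andP [h2 _] : (f2 y \in S1) && E y (f2 y) by apply: Hf21; rewrite inE yR1 yR.
        by move: h1; rewrite e inE h2.
      - move=> e; have /andP [h1 _] := Hf11 y yR1.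
        have /andP [h2 _] : (f2 x \in S1) && E x (f2 x) by apply: Hf21; rewrite inE xR1 xR.
        by move: h1; rewrite -e inE h2.
      by apply: Hf22; rewrite inE ?xR1 ?yR1 ?xR ?yR.
    right; exists (R2 :|: R1), S2; split.
    - by rewrite subUset sR1' (subset_trans sR2) ?subsetDl.
    - exact: subset_trans sS2 sS1'.
    - have dis : [disjoint R2 & R1].
        apply/pred0P => x /=; apply/negbTE/andP => [[xR2 xR1]].
        by move/(subsetP sR2): xR2; rewrite inE xR1.
      rewrite cardsU (disjoint_setI0 dis) cards0 subn0.
      rewrite cR2 in cRS2; lia.
    move=> x y; rewrite inE => /orP [xR2|xR1] yS2; first exact: zRS2.
    by apply: zRS => //; apply: (subsetP sS2).
  right; exists R2, (S2 :|: S1); split.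
  - exact: subset_trans sR2 sR1'.
  - by rewrite subUset sS1' (subset_trans sS2) ?subsetDl.
  - have dis : [disjoint S2 & S1].
      apply/pred0P => x /=; apply/negbTE/andP => [[xS2 xS1]].
      by move/(subsetP sS2): xS2; rewrite inE xS1.
    rewrite cardsU (disjoint_setI0 dis) cards0 subn0; lia.
  move=> x y xR2; rewrite inE => /orP [yS2|yS1]; first exact: zRS2.
  by apply: zRS => //; apply: (subsetP sR2).
right.
have : (0 < #|C0|) by lia.
case/card_gt0P => j jC.
exists R0, [set j]; split => //.
- by rewrite sub1set.
- by rewrite cards1 addn1.
move=> x y xR; rewrite inE => /eqP ->; apply/negP => Exj.
by move/negP: Hno; apply; apply/existsP; exists x; rewrite xR; apply/existsP; exists j; rewrite jC.
Qed.

Lemma FK (R0 : {set I}) (C0 : {set J}) : #|R0| = #|C0| -> matching R0 C0 \/ zblock R0 C0.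
Proof. exact: FK_aux. Qed.
End FK.
Local Open Scope ring_scope.

Lemma nat_aux r s k : (r + s = k.+1 -> r <= k -> s <= k -> 0 < r /\ 0 < s)%N.
Proof. lia. Qed.

Section Alg.
Variables (F : fieldType) (n : nat).
Notation MP := {mpoly F[n]}.

Lemma unit_eval0 (u : MP) : u \is a GRing.unit -> meval (fun _ => 0) u != 0.
Proof.
case/unitrP => v [vu _]; apply/eqP => h.
have := congr1 (meval (fun _ : 'I_n => (0:F))) vu.
by rewrite mevalM h mulr0 meval1 => /eqP; rewrite eq_sym oner_eq0.
Qed.

Lemma det_row0 (R : comNzRingType) k (A : 'M[R]_k) i :
  (forall j, A i j = 0) -> \det A = 0.
Proof. by move=> H; rewrite (expand_det_row _ i) big1 // => j _; rewrite H mul0r. Qed.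

Lemma factor_red m (A : 'M[MP]_m) (Rw S : {set 'I_m}) :
  (#|Rw| + #|S|)%N = m -> (0 < #|Rw|)%N -> (0 < #|S|)%N ->
  (forall i j, i \in Rw -> j \in S -> A i j = 0) ->
  (forall i j, meval (fun _ => 0) (A i j) = 0) ->
  ~ irreducible_elt (\det A).
Proof.
move=> hc hR hS hz h0 [_ _ irr].
(* bijection e : S -> ~: Rw *)
have cC : #|~: Rw| = #|S| by rewrite cardsCs card_ord setCK; lia.
have [k0 k0S] := card_gt0P hS.
have [[e [he1 he2]]|[R1 [S1 [sR1 sS1 c1 z1]]]] := FK k0 (fun _ _ => true) (esym cC).
  2:{ exfalso.
      have l1 : (#|R1| <= #|S|)%N by apply: subset_leq_card.
      have l2 : (#|S1| <= #|~: Rw|)%N by apply: subset_leq_card.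
      have [x xR1] : exists x, x \in R1 by apply/card_gt0P; lia.
      have [y yS1] : exists y, y \in S1 by apply/card_gt0P; lia.
      by have := z1 x y xR1 yS1. }
have eS k : k \in S -> e k \notin Rw.
  by move=> kS; have /andP [+ _] := he1 k kS; rewrite inE.
have esurj i : i \notin Rw -> exists2 k, k \in S & e k = i.
  move=> iR; have : i \in e @: S.
    have -> : e @: S = ~: Rw.
      apply/eqP; rewrite eqEcard card_in_imset // cC leqnn andbT.
      by apply/subsetP => y /imsetP [k kS ->]; rewrite inE eS.
    by rewrite inE.
  by case/imsetP => k kS ->; exists k.
pose Q1 := \matrix_(i < m, k < m) (if k \in S then (e k == i)%:R else A i k).
pose Q2 := \matrix_(k < m, j < m)
   (if k \in S then (if j \in S then A (e k) j else 0) else (k == j)%:R).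
have hA : A = Q1 *m Q2.
  apply/matrixP => i j; rewrite !mxE.
  case: (boolP (j \in S)) => jS.
    case: (boolP (i \in Rw)) => iR.
      rewrite hz // big1 // => k _; rewrite !mxE.
      case: (boolP (k \in S)) => kS; last by case: eqP => [kj|]; [rewrite kj jS in kS | rewrite mulr0].
      rewrite jS; case: eqP => [eki|]; last by rewrite mul0r.
      by move: (eS k kS); rewrite eki iR.
    have [k1 k1S ek1] := esurj i iR.
    rewrite (bigD1 k1) //= !mxE k1S jS ek1 eqxx mul1r big1 ?addr0 // => k kk1.
    rewrite !mxE; case: (boolP (k \in S)) => kS.
      rewrite jS; case: eqP => [ek|]; last by rewrite mul0r.
      by move: kk1; rewrite (he2 k k1 kS k1S) ?eqxx // ek.
    by case: eqP => [kj|]; [rewrite kj jS in kS | rewrite mulr0].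
  rewrite (bigD1 j) //= !mxE (negbTE jS) eqxx mulr1 big1 ?addr0 // => k kj.
  rewrite !mxE (negbTE jS); case: (k \in S); first by rewrite mulr0.
  by rewrite (negbTE kj) mulr0.
have h0' (k : 'I_m) (b : bool) : meval (fun _ => 0) (b%:R : MP) = b%:R by rewrite rmorph_nat.
move: (irr (\det Q1) (\det Q2)); rewrite -det_mulmx -hA => /(_ erefl) [] /unit_eval0;
  rewrite -det_map_mx /=; apply/negP/negPn/eqP.
  have [i iR] := card_gt0P hR.
  apply: (det_row0 (i := i)) => k; rewrite !mxE.
  case: (boolP (k \in S)) => kS; last by rewrite h0.
  by rewrite rmorph_nat; case: eqP => // ek; rewrite -ek (negbTE (eS k kS)) in iR.
apply: (det_row0 (i := k0)) => j; rewrite !mxE k0S.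
by case: (j \in S); rewrite ?h0 ?raddf0.
Qed.

Variables (m : nat) (pos : 'I_n -> 'I_m * 'I_m).
Hypothesis pos_inj : injective pos.
Notation q := (@hop_mx F m n pos).

Lemma q_eval x i j : meval x (q i j) =
  if [pick k | pos k == (i, j)] is Some k then x k else 0.
Proof. by rewrite mxE; case: pickP => [k _|_]; rewrite ?mevalXU ?meval0. Qed.

Lemma q_nz i j : q i j != 0 -> exists k, pos k = (i, j).
Proof. by rewrite mxE; case: pickP => [k /eqP pk _|_]; [exists k | rewrite eqxx]. Qed.

Lemma cofactor_nz a j : irreducible_elt (\det q) -> cofactor q a j != 0.
Proof.
move=> irr.
have cc : #|[set~ a]| = #|[set~ j]| by rewrite !cardsC1.
have [[f [hf1 hf2]]|[R1 [S1 [sR1 sS1 c1 z1]]]] := FK j (fun i c => q i c != 0) cc.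
  pose x0 k := if ((pos k).1 != a) && ((pos k).2 == f (pos k).1) then (1:F) else 0.
  have ev i c : meval x0 (q i c) = ((i != a) && (c == f i))%:R.
    rewrite q_eval; case: pickP => [k /eqP pk|none].
      by rewrite /x0 pk /=; case: ifP.
    case: (boolP (i != a)) => //= ia; case: eqP => // cf.
    have /andP [_ hq] : (f i \in [set~ j]) && (q i (f i) != 0) by apply: (hf1); rewrite !inE.
    by case/q_nz: hq => k pk; have := none k; rewrite pk cf eqxx.
  apply/eqP => h0.
  have := congr1 (meval x0) h0; rewrite -cofactor_map_mx meval0.
  rewrite /cofactor; apply/eqP; rewrite mulf_eq0 signr_eq0 /=.
  set N := row' a _.
  have fj i : f (lift a i) != j.
    have /andP [+ _] : (f (lift a i) \in [set~ j]) && (q (lift a i) (f (lift a i)) != 0).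
      by apply: (hf1); rewrite !inE eq_sym neq_lift.
    by rewrite !inE.
  have NN : N *m N^T = 1%:M.
    apply/matrixP => i1 i2; rewrite !mxE.
    have : j != f (lift a i1) by rewrite eq_sym fj.
    case/unlift_some => c1 ec1 _.
    have ev' i c : meval x0 (if [pick k | pos k == (i, c)] is Some k then 'X_k else 0)
        = ((i != a) && (c == f i))%:R by move: (ev i c); rewrite mxE.
    have la i : (lift a i != a) = true by rewrite eq_sym neq_lift.
    have E1 c : N i1 c * N^T c i2 =
        ((lift j c == f (lift a i1)) && (lift j c == f (lift a i2)))%:R.
      by rewrite !mxE !ev' !la /= -natrM mulnb.
    rewrite (eq_bigr _ (fun c _ => E1 c)) (bigD1 c1) //= big1; last first.
      move=> c cc1; by rewrite ec1 (inj_eq (@lift_inj _ j)) (negbTE cc1).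
    rewrite -ec1 eqxx /= addr0.
    suff -> : (f (lift a i1) == f (lift a i2)) = (i1 == i2) by [].
    case: (eqVneq i1 i2) => [->|ne]; first by rewrite eqxx.
    apply: negbTE; apply: contra ne => /eqP e; apply/eqP.
    by apply: (@lift_inj _ a); apply: hf2 => //; rewrite !inE eq_sym neq_lift.
  apply/eqP => dN.
  have := congr1 determinant NN; rewrite det_mulmx dN mul0r det1 => /eqP.
  by rewrite eq_sym oner_eq0.
exfalso.
have m0 : (0 < m)%N by apply: leq_ltn_trans (ltn_ord a).
have l1 : (#|R1| <= #|[set~ a]|)%N by apply: subset_leq_card.
have l2 : (#|S1| <= #|[set~ j]|)%N by apply: subset_leq_card.
move: c1 l1 l2; rewrite !cardsC1 card_ord => c1 l1 l2; have em := prednK m0.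
apply: (@factor_red m q R1 S1) irr.
- exact: etrans c1 em.
- by case: (nat_aux c1 l1 l2).
- by case: (nat_aux c1 l1 l2).
- by move=> i c iR cS; apply/eqP; move: (z1 i c iR cS); rewrite negbK.
by move=> i c; rewrite q_eval; case: pickP.
Qed.
End Alg.

Lemma claim_all (F : fieldType) : null_state_claim F.
Proof.
move=> m n pos hm inj irr.
have m0 : (0 < m)%N by apply: ltnW.
pose a : 'I_m := Ordinal m0.
have cnz j := cofactor_nz a j irr.
set q := hop_mx pos in irr cnz *.
exists (\prod_j cofactor q a j); split.
  move=> [c hc].
  pose lq := [tuple (if (pos i).1 == a then 0 else 'X_i : {mpoly F[n]}) | i < n].
  have epsi i c' : comp_mpoly lq (q i c') = if i == a then 0 else q i c'.
    rewrite mxE; case: pickP => [k /eqP pk|_]; last by rewrite comp_mpoly0; case: ifP.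
    by rewrite comp_mpolyXU -tnth_nth tnth_mktuple pk.
  clearbody q.
  have hPsi : comp_mpoly lq (\prod_j cofactor q a j) = \prod_j cofactor q a j.
    rewrite rmorph_prod; apply: eq_bigr => j _; rewrite -cofactor_map_mx /cofactor.
    congr (_ * \det _); apply/matrixP => i c'.
    rewrite !mxE; have := epsi (lift a i) (lift j c'); rewrite eq_sym (negbTE (neq_lift _ _)); exact.
  have := congr1 (comp_mpoly lq) hc; rewrite hPsi rmorphM -det_map_mx.
  rewrite (@det_row0 _ _ _ a) ?mulr0 => [hP0|j]; last by rewrite mxE; have := epsi a j; rewrite eqxx; exact.
  move: hP0 => /eqP; apply/negP; apply/prodf_neq0 => j _; exact: cnz.
move=> x _ hP psi psin hk j.
clearbody q.
apply/negP => /eqP pj.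
set M := map_mx (meval x) q in hk.
have cM : cofactor M a j != 0.
  move: hP; rewrite rmorph_prod => /prodf_neq0 /(_ j isT).
  by rewrite -cofactor_map_mx.
move: cM; rewrite /cofactor mulf_eq0 signr_eq0 /= => dN.
set N := row' a (col' j M) in dN.
have Nu : N \in unitmx by rewrite unitmxE unitfE.
have Nv : N *m row' j psi = 0.
  apply/matrixP => i k; rewrite (ord1 k) !mxE.
  have := congr1 (fun A : 'M_(m,1) => A (lift a i) 0) hk; rewrite !mxE (bigD1_ord j) //= pj mulr0 add0r => h; apply: (etrans _ h).
  by apply: eq_bigr => c _; rewrite !mxE.
have v0 : row' j psi = 0 by rewrite -(mulKmx Nu (row' j psi)) Nv mulmx0.
move/eqP: psin; apply; apply/matrixP => i k; rewrite mxE (ord1 k).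
case: (eqVneq j i) => [<-//|ji].
have [c -> _] := unlift_some ji.
by have := congr1 (fun A : 'M_(m.-1,1) => A c 0) v0; rewrite !mxE.
Qed.

Theorem mainTheorem2 (R : realType) :
  null_state_claim R /\ null_state_claim (complex R).
Proof. by split; apply: claim_all. Qed.
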